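(* Let $M\cong\mathbb Z^d$, $\Sigma$, $v_1,\ldots,v_n$, $\mathcal A$, $\bar M$, $\bar N$, $\mathbf v_0,\ldots,\mathbf v_n$, $K$ and $\Psi_{\mathbf p}$ be as in the context, with $\mathbb P_\Sigma$ nef-Fano. Then for every $\mathbf p\in K\cap\bar M$ and every $\mathbf n\in\bar N=\mathrm{Hom}(\bar M,\mathbb Z)$, $$\sum_{i=0}^na_i(\mathbf n\cdot\mathbf v_i)\Psi_{\mathbf p+\mathbf v_i}=0,$$ where $a_0=1$.
   Context: $M\cong\mathbb Z^d$ is a lattice with dual $N$; $\Sigma$ is a complete simplicial fan in $M_{\mathbb R}$ with minimal ray generators $v_1,\ldots,v_n$; $\mathbb P_\Sigma$ is nef-Fano (in particular every $v_i$ lies on the boundary of $\mathrm{conv}(v_1,\ldots,v_n)$). For $k\ge0$, $A_k$ is the quotient of $\mathbb C[D_1,\ldots,D_n]$ by the linear elements $\sum_i(\lambda\cdot v_i)D_i$ ($\lambda\in N$) and the monomials $\prod_iD_i^{r_i}$ such that no cone of $\Sigma$ contains all $v_i$ with $r_i>k$; $\mathcal A$ is the direct limit of the $A_k$ under the maps $A_k\to A_{k+l}$ given by multiplication by $\prod_iD_i^l$. Put $D_0=-\sum_iD_i$. Let $\bar M=M\oplus\mathbb Z$, $\mathbf v_i=v_i\oplus1$ ($1\le i\le n$), $\mathbf v_0=\mathbf 0\oplus1$, $K$ the cone spanned by $\mathbf v_0,\ldots,\mathbf v_n$. For $\beta=(b_0,\ldots,b_n)\in\mathbb Z^{n+1}$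 with $b_0\le0$, $\Phi_\beta\in\mathcal A$ is the image of $D_0^{-b_0}\prod_{i=1}^nD_i^{k-b_i}\in A_k$ for $k\ge\max_ib_i$. For $\mathbf p\in K\cap\bar M$, $\Psi_{\mathbf p}=\sum_{\beta:\sum_{i=0}^nb_i\mathbf v_i=-\mathbf p,\ b_0\le0}\Phi_\beta\prod_{i=1}^na_i^{b_i}$, a formal Laurent series in $a_1,\ldots,a_n$ with coefficients in $\mathcal A$. *)

(* Defs.v *)
From HB Require Import structures.
From mathcomp Require Import all_boot all_order all_algebra.
From mathcomp Require Import mpoly.
From mathcomp Require Import Rstruct.
From mathcomp Require Import complex.

Set Implicit Arguments.
Unset Strict Implicit.
Unset Printing Implicit Defensive.

Import Order.TTheory GRing.Theory Num.Theory.
Local Open Scope ring_scope.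

Definition RR : rcfType := Rdefinitions.R.
Definition CC : numClosedFieldType := (RR[i])%C.

(* The lattice M = Z^d is 'rV[int]_d; its dual N = Hom(M,Z) is also
   identified with 'rV[int]_d via the standard pairing dotZ. *)
Definition dotZ (d : nat) (x y : 'rV[int]_d) : int := \sum_(j < d) x 0 j * y 0 j.
Definition toR (d : nat) (x : 'rV[int]_d) : 'rV[RR]_d := map_mx intr x.
Definition dotR (d : nat) (x y : 'rV[RR]_d) : RR := \sum_(j < d) x 0 j * y 0 j.

Section Fan.
Variables (d n : nat) (v : 'I_n -> 'rV[int]_d).

Definition coneR (S : {set 'I_n}) (x : 'rV[RR]_d) : Prop :=
  exists c : 'I_n -> RR, (forall i, 0 <= c i) /\ x = \sum_(i in S) c i *: toR (v i).

(* sigma = the cones of Sigma, each recorded by the set of indices of its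
   ray generators: cone(S) = cone{v_i | i in S}. *)
Definition complete_simplicial_fan (sigma : {set {set 'I_n}}) : Prop :=
  [/\ (* closed under faces (faces of a simplicial cone = subsets) *)
      (forall S T : {set 'I_n}, S \in sigma -> T \subset S -> T \in sigma),
      (forall S, S \in sigma -> forall c : 'I_n -> RR,
          \sum_(i in S) c i *: toR (v i) = 0 -> forall i, i \in S -> c i = 0),
      (forall S T : {set 'I_n}, S \in sigma -> T \in sigma -> forall x,
          (coneR S x /\ coneR T x) <-> coneR (S :&: T) x),
      (forall x, exists2 S, S \in sigma & coneR S x) &
      (forall i, [set i] \in sigma)].

Definition minimal_generators : Prop :=
  forall i (m : nat) (w : 'rV[int]_d), (0 < m)%N -> v i = m%:Z *: w -> m = 1%N.

(* P_Sigma nef-Fano: the anticanonical divisor sum_i D_i is nef, i.e. for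
   every cone sigma there is u in N_R with <u,v_i> = 1 for the generators of
   sigma and <u,v_j> <= 1 for all j. *)
Definition nef_fano (sigma : {set {set 'I_n}}) : Prop :=
  forall S, S \in sigma -> exists u : 'rV[RR]_d,
    (forall i, i \in S -> dotR u (toR (v i)) = 1) /\
    (forall j, dotR u (toR (v j)) <= 1).

(* p = (pM, pl) in Mbar = M + Z lies in K = cone(vbar_0, ..., vbar_n),
   vbar_0 = (0,1), vbar_i = (v_i,1). *)
Definition inK (pM : 'rV[int]_d) (pl : int) : Prop :=
  exists (c0 : RR) (c : 'I_n -> RR), 0 <= c0 /\ (forall i, 0 <= c i) /\
    toR pM = \sum_(i < n) c i *: toR (v i) /\
    (pl%:~R : RR) = c0 + \sum_(i < n) c i.

Definition Pol := {mpoly CC[n]}.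

Definition Igen (sigma : {set {set 'I_n}}) (k : nat) (g : Pol) : Prop :=
  (exists lam : 'rV[int]_d, g = \sum_(i < n) (dotZ lam (v i))%:~R *: 'X_i) \/
  (exists r : 'X_{1..n}, g = 'X_[r] /\
     ~ (exists2 S, S \in sigma & forall i, (k < r i)%N -> coneR S (toR (v i)))).

(* membership in the ideal I_k, so that A_k = C[D_1..D_n] / I_k *)
Definition inI (sigma : {set {set 'I_n}}) (k : nat) (f : Pol) : Prop :=
  exists s : seq (Pol * Pol),
    (forall x, x \in s -> Igen sigma k x.2) /\ f = \sum_(x <- s) x.1 * x.2.

Definition Dpow (l : nat) : Pol := \prod_(i < n) 'X_i ^+ l.
Definition D0 : Pol := - \sum_(i < n) 'X_i.

(* An element of the direct limit cA is represented by (k, f), the image of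
   the class of f in A_k. *)
Definition Aelt := (nat * Pol)%type.
Definition A0 : Aelt := (0%N, 0).
Definition Aadd (x y : Aelt) : Aelt :=
  let k := maxn x.1 y.1 in (k, Dpow (k - x.1) * x.2 + Dpow (k - y.1) * y.2).
Definition Ascale (c : CC) (x : Aelt) : Aelt := (x.1, c *: x.2).
(* x = 0 in the direct limit: some transition map A_k -> A_{k+l} kills it *)
Definition Azero (sigma : {set {set 'I_n}}) (x : Aelt) : Prop :=
  exists l : nat, inI sigma (x.1 + l) (Dpow l * x.2).

(* Phi_beta for beta = (b0, b), b0 <= 0: the image of
   D_0^{-b_0} prod_i D_i^{k-b_i} in A_k, k = max_i |b_i| >= max_i b_i. *)
Definition Phi (b0 : int) (b : 'I_n -> int) : Aelt :=
  let k := (\max_(i < n) `|b i|)%N in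
  (k, D0 ^+ `|b0| * \prod_(i < n) 'X_i ^+ `|k%:Z - b i|).

(* Psi_p as a formal Laurent series in a_1..a_n with coefficients in cA:
   the function sending an exponent b in Z^n to the coefficient of
   prod_i a_i^{b_i}.  Given b, beta is forced: b0 = -pl - sum_i b_i. *)
Definition Psi (pM : 'rV[int]_d) (pl : int) (b : 'I_n -> int) : Aelt :=
  let b0 := - pl - \sum_(i < n) b i in
  if (\sum_(i < n) b i *: v i == - pM) && (b0 <= 0) then Phi b0 b else A0.

End Fan.

(* exponent b - e_i : the coefficient of a^b in a_i * F is that of a^(b-e_i) in F *)
Definition shiftE (n : nat) (i : 'I_n) (b : 'I_n -> int) : 'I_n -> int :=
  fun j => b j - (j == i)%:R.

(* Main.v *)
Require Import Defs.
From HB Require Import structures.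
From mathcomp Require Import all_boot all_order all_algebra.
From mathcomp Require Import mpoly.
From mathcomp Require Import Rstruct.
From mathcomp Require Import complex.
From mathcomp Require Import zify ring lra.
Import Order.TTheory GRing.Theory Num.Theory.
Local Open Scope ring_scope.
Set Implicit Arguments.
Unset Strict Implicit.

Section Val.
Variable n : nat.

Definition valN (N : nat) (x : Aelt n) : Pol n := Dpow n (N - x.1) * x.2.

Lemma DpowD a c : Dpow n a * Dpow n c = Dpow n (a + c).
Proof. by rewrite /Dpow -big_split; apply eq_bigr => i _; rewrite exprD. Qed.

Lemma val_add N (x y : Aelt n) : (maxn x.1 y.1 <= N)%N ->
  valN N (Aadd x y) = valN N x + valN N y.
Proof.
move=> H; rewrite /valN /Aadd /= mulrDr !mulrA !DpowD.
have -> : (N - maxn x.1 y.1 + (maxn x.1 y.1 - x.1) = N - x.1)%N by lia.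
have -> : (N - maxn x.1 y.1 + (maxn x.1 y.1 - y.1) = N - y.1)%N by lia.
by [].
Qed.

Lemma val_big N m (F : 'I_m -> Aelt n) : (forall i, (F i).1 <= N)%N ->
  ((\big[@Aadd n/A0 n]_(i < m) F i).1 <= N)%N /\
  valN N (\big[@Aadd n/A0 n]_(i < m) F i) = \sum_(i < m) valN N (F i).
Proof.
move=> HF.
apply: (big_rec2 (fun x y => (x.1 <= N)%N /\ valN N x = y)).
  by split => //; rewrite /valN /= mulr0.
move=> i x y _ [Hx <-]; split; first by rewrite /= geq_max HF.
by rewrite val_add // geq_max HF.
Qed.

Lemma val_scale N c (x : Aelt n) : valN N (Ascale c x) = c *: valN N x.
Proof. by rewrite /valN /Ascale /= scalerAr. Qed.

Lemma val_A0 N : valN N (A0 n) = 0.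
Proof. by rewrite /valN mulr0. Qed.

Lemma val_Phi N b0 (b : 'I_n -> int) : ((\max_(i < n) `|b i|) <= N)%N ->
  valN N (Phi b0 b) = D0 n ^+ `|b0| * \prod_(i < n) 'X_i ^+ `|N%:Z - b i|.
Proof.
move=> H; rewrite /valN /Phi /= mulrCA; congr (_ * _).
rewrite /Dpow -big_split /=; apply eq_bigr => i _; rewrite -exprD; congr (_ ^+ _).
have Hi : (`|b i| <= \max_(j < n) `|b j|)%N := leq_bigmax i. move: Hi H. set k := (\max_(j < n) _)%N. move=> Hi H. move: (b i) Hi => z Hi. clearbody k. lia.
Qed.

End Val.
Lemma toR_comb d m (c : 'I_m -> int) (w : 'I_m -> 'rV[int]_d) :
  toR (\sum_j c j *: w j) = \sum_j (c j)%:~R *: toR (w j).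
Proof.
apply/rowP => k; rewrite /toR !mxE !summxE /=.
rewrite rmorph_sum /=; apply eq_bigr => j _; rewrite !mxE rmorphM.
by [].
Qed.

Lemma toRN d (x : 'rV[int]_d) : toR (- x) = - toR x.
Proof. by apply/rowP => k; rewrite /toR !mxE rmorphN. Qed.

Lemma dotR_sum d m (u : 'rV[RR]_d) (c : 'I_m -> RR) w :
  dotR u (\sum_j c j *: w j) = \sum_j c j * dotR u (w j).
Proof.
rewrite /dotR.
under eq_bigr do rewrite summxE mulr_sumr.
rewrite exchange_big /=; apply eq_bigr => j _.
rewrite mulr_sumr; apply eq_bigr => k _; rewrite !mxE; ring.
Qed.

Lemma dotRN d (u x : 'rV[RR]_d) : dotR u (- x) = - dotR u x.
Proof. rewrite /dotR -sumrN; apply eq_bigr => k _; rewrite !mxE; ring. Qed.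

Lemma face d n (v : 'I_n -> 'rV[int]_d) sigma S j :
  complete_simplicial_fan v sigma -> S \in sigma ->
  coneR v S (toR (v j)) -> j \in S.
Proof.
case=> _ Hsimp Hmeet _ Hray HS Hc.
have Hj : coneR v [set j] (toR (v j)).
  by exists (fun _ => 1); split => [i|]; [exact: ler01 | rewrite big_set1 scale1r].
have [c [_ Hcc]] := (Hmeet S [set j] HS (Hray j) (toR (v j))).1 (conj Hc Hj).
apply/negPn/negP => HjS.
have H0 : toR (v j) = 0.
  rewrite Hcc big_pred0 // => i; rewrite !inE; apply/negbTE/andP => -[Hi /eqP Hij].
  by move: Hi; rewrite Hij (negbTE HjS).
have := Hsimp [set j] (Hray j) (fun _ => 1).
rewrite big_set1 scale1r H0 => /(_ erefl j); rewrite set11 => /(_ isT) /eqP.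
by rewrite oner_eq0.
Qed.

Lemma no_cone d n (v : 'I_n -> 'rV[int]_d) sigma pM pl (b : 'I_n -> int) S :
  complete_simplicial_fan v sigma -> nef_fano v sigma -> inK v pM pl ->
  \sum_j b j *: v j = - pM -> \sum_j b j = -(pl+1) -> S \in sigma ->
  (forall j, b j < 0 -> coneR v S (toR (v j))) -> False.
Proof.
move=> Hfan Hnef [c0 [c [Hc0 [Hc [HpM Hpl]]]]] Hsum Hsb HS Hneg.
have [u [Hu1 Hule]] := Hnef S HS.
have E1 : dotR u (toR pM) <= pl%:~R.
  rewrite HpM dotR_sum Hpl.
  have : \sum_i c i * dotR u (toR (v i)) <= \sum_i c i.
    apply: ler_sum => i _; rewrite -[leRHS]mulr1; exact: ler_wpM2l.
  lra.
have E2 : dotR u (toR (- pM)) = \sum_j (b j)%:~R * dotR u (toR (v j)).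
  by rewrite -Hsum toR_comb dotR_sum.
have E3 : \sum_j (b j)%:~R * dotR u (toR (v j)) <= \sum_j ((b j)%:~R : RR).
  apply: ler_sum => j _.
  case: (ltrP (b j) 0) => Hb.
    by rewrite Hu1 ?mulr1 //; apply: (face Hfan HS); exact: Hneg.
  rewrite -[leRHS]mulr1; apply: ler_wpM2l; last exact: Hule.
  by rewrite ler0z.
have E4 : \sum_j ((b j)%:~R : RR) = - (pl%:~R + 1).
  by rewrite -rmorph_sum /= Hsb rmorphN rmorphD.
move: E2; rewrite toRN dotRN => E2.
lra.
Qed.

Lemma sum_shift d n (v : 'I_n -> 'rV[int]_d) (b : 'I_n -> int) i :
  \sum_j shiftE i b j *: v j = \sum_j b j *: v j - v i.
Proof.
rewrite /shiftE; under eq_bigr do rewrite scalerBl; rewrite sumrB; congr (_ - _).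
rewrite (bigD1 i) //= eqxx scale1r big1 ?addr0 // => j /negbTE ->.
by rewrite scale0r.
Qed.

Lemma sum_shift2 n (b : 'I_n -> int) i :
  \sum_j shiftE i b j = \sum_j b j - 1.
Proof.
rewrite /shiftE sumrB; congr (_ - _).
rewrite (bigD1 i) //= eqxx big1 ?addr0 // => j /negbTE ->.
by [].
Qed.

Lemma eq_shift d (a p c : 'rV[int]_d) : (a - c == - (p + c)) = (a == - p).
Proof.
rewrite opprD; apply/eqP/eqP => [H|->] //.
by rewrite -(subrK c a) H subrK.
Qed.

Unset Implicit Arguments.
Set Strict Implicit.

Theorem proposition3p5 (d n : nat) (v : 'I_n -> 'rV[int]_d)
    (sigma : {set {set 'I_n}}) :
  complete_simplicial_fan v sigma -> minimal_generators v -> nef_fano v sigma ->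
  forall (pM : 'rV[int]_d) (pl : int), inK v pM pl ->
  forall (nM : 'rV[int]_d) (nl : int) (b : 'I_n -> int),
  Azero v sigma
    (Aadd (Ascale (nl%:~R) (Psi v pM (pl + 1) b))
          (\big[@Aadd n/A0 n]_(i < n)
              Ascale ((dotZ nM (v i) + nl)%:~R) (Psi v (pM + v i) (pl + 1) (shiftE i b)))).
Proof.
move=> Hfan _ Hnef pM pl HK nM nl b.
set N := (\max_(i < n) `|b i|).+1.
have HbN : forall j, (`|b j| < N)%N.
  by move=> j; rewrite ltnS; exact: (leq_bigmax j).
have HsN : forall i, (\max_(j < n) `|shiftE i b j| <= N)%N.
  move=> i; apply/bigmax_leqP => j _; have := HbN j; rewrite /shiftE.
  case: (j == i) => /=; lia.
set F := fun i => Ascale ((dotZ nM (v i) + nl)%:~R) (Psi v (pM + v i) (pl + 1) (shiftE i b)).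
set T0 := Ascale (nl%:~R) (Psi v pM (pl + 1) b).
have Hl0 : (T0.1 <= N)%N.
  rewrite /T0 /Psi /=; case: ifP => _ //=; exact: leqnSn.
have HlF : forall i, ((F i).1 <= N)%N.
  move=> i; rewrite /F /Psi /=; case: ifP => _ //=; exact: HsN.
have [Hlb Hvb] := val_big HlF.
have Hle : ((Aadd T0 (\big[@Aadd n/A0 n]_(i < n) F i)).1 <= N)%N.
  by rewrite /= geq_max Hl0 Hlb.
exists (N - (Aadd T0 (\big[@Aadd n/A0 n]_(i < n) F i)).1)%N.
rewrite subnKC // -/(valN N _) val_add ?geq_max ?Hl0 // Hvb.
rewrite /F /T0 val_scale; under eq_bigr do rewrite val_scale.
set sb := \sum_(i < n) b i.
set Sb := \sum_(i < n) b i *: v i.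
set b0 := - (pl + 1) - sb.
have EPsi0 : Psi v pM (pl + 1) b = if (Sb == - pM) && (b0 <= 0) then Phi b0 b else A0 n by [].
have EPsi : forall i, Psi v (pM + v i) (pl + 1) (shiftE i b) =
    if (Sb == - pM) && (b0 + 1 <= 0) then Phi (b0 + 1) (shiftE i b) else A0 n.
  move=> i; rewrite /Psi /= sum_shift eq_shift sum_shift2.
  have -> : (- (pl + 1) - (sb - 1)) = b0 + 1 by rewrite /b0; lia.
  by [].
under eq_bigr do rewrite EPsi.
rewrite EPsi0.
have inI0 : inI v sigma N 0 by exists [::]; split => //; rewrite big_nil.
case Hc: (Sb == - pM) => /=; last first.
  by rewrite val_A0 scaler0 big1 ?addr0 // => i _; exact: scaler0.
case: (ltrgtP b0 0) => Hb0.
- have E1 : (b0 <= 0) = true by apply/idP; lia.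
  have E2 : (b0 + 1 <= 0) = true by apply/idP; lia.
  rewrite ?E1; under eq_bigr do rewrite E2.
  set P := (\prod_(j < n) 'X_j ^+ `|N%:Z - b j| : Pol n).
  have HP : forall i, valN N (Phi (b0 + 1) (shiftE i b)) = D0 n ^+ `|b0 + 1| * (P * 'X_i).
    move=> i; rewrite val_Phi ?HsN //; congr (_ * _); rewrite /P.
    have -> : \prod_(j < n) 'X_j ^+ `|N%:Z - shiftE i b j| =
              \prod_(j < n) ('X_j ^+ `|N%:Z - b j| * 'X_j ^+ (j == i)) :> Pol n.
      apply eq_bigr => j _; rewrite -exprD; congr (_ ^+ _); have := HbN j; rewrite /shiftE.
      by case: (j == i) => /=; rewrite ?mulr1n ?mulr0n; lia.
    rewrite big_split /=; congr (_ * _).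
    by rewrite (bigD1 i) //= eqxx expr1 big1 ?mulr1 // => j /negbTE ->; exact: expr0.
  rewrite val_Phi ?leqnSn //.
  under eq_bigr do rewrite HP.
  have Hab : absz b0 = (absz (b0 + 1)).+1 by lia.
  rewrite Hab exprS.
  set k := absz (b0 + 1).
  set g := \sum_(i < n) (dotZ nM (v i))%:~R *: ('X_i : Pol n).
  have -> : nl%:~R *: (D0 n * D0 n ^+ k * P) +
      \sum_(i < n) (dotZ nM (v i) + nl)%:~R *: (D0 n ^+ k * (P * 'X_i)) =
      (D0 n ^+ k * P) * g.
    have E0 : nl%:~R *: (D0 n * D0 n ^+ k * P) =
        - \sum_(i < n) nl%:~R *: (D0 n ^+ k * (P * 'X_i)).
      rewrite /D0 mulNr mulr_suml mulNr mulr_suml scalerN scaler_sumr; congr (- _).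
      apply eq_bigr => i _; congr (_ *: _).
      by rewrite -mulrA mulrCA [X in _ * X]mulrC.
    under eq_bigr do rewrite intrD scalerDl.
    rewrite big_split /= E0 addrCA addNr addr0 /g mulr_sumr; apply eq_bigr => i _.
    by rewrite -scalerAr mulrA.
  exists [:: (D0 n ^+ k * P, g)]; split; last by rewrite big_cons big_nil addr0.
  move=> x; rewrite inE => /eqP -> /=; left; exists nM; by [].
- have E1 : (b0 <= 0) = false by apply/negbTE/negP; lia.
  have E2 : (b0 + 1 <= 0) = false by apply/negbTE/negP; lia.
  rewrite ?E1; under eq_bigr do rewrite E2.
  by rewrite val_A0 scaler0 big1 ?addr0 // => i _; exact: scaler0.
- have E1 : (b0 <= 0) = true by apply/idP; lia.
  have E2 : (b0 + 1 <= 0) = false by apply/negbTE/negP; lia.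
  rewrite ?E1; under eq_bigr do rewrite E2.
  rewrite val_A0 big1 ?addr0; last by move=> i _; exact: scaler0.
  rewrite val_Phi ?leqnSn //.
  have Hb0' : b0 = 0 by [].
  rewrite Hb0' absz0 expr0 mul1r.
  set r := [multinom `|N%:Z - b j|%N | j < n].
  have -> : (\prod_(j < n) 'X_j ^+ `|N%:Z - b j| : Pol n) = 'X_[r].
    by rewrite mpolyXE_id; apply eq_bigr => j _; rewrite mnmE.
  exists [:: (nl%:~R *: 1, 'X_[r])]; split; last first.
    by rewrite big_cons big_nil addr0 -scalerAl mul1r.
  move=> x; rewrite inE => /eqP -> /=; right; exists r; split => // -[S HS Hall].
  apply: (no_cone Hfan Hnef HK (eqP Hc) _ HS).
    move: Hb0'; rewrite /b0 /sb => /eqP; rewrite subr_eq0 => /eqP H; exact: (esym H).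
  move=> j Hj; apply: Hall; rewrite mnmE; have := HbN j; lia.
Qed.
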